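(* Let $\vartheta$ be a primitive random substitution. If $X_\vartheta$ contains a periodic element (some $x$ with $\sigma^n(x)=x$ for some $n\ge1$), then $\operatorname{Aut}(X_\vartheta)$ is residually finite.
   Context: A random substitution on a finite alphabet $\mathcal A$ is a map $\vartheta$ from $\mathcal A$ to non-empty finite sets of non-empty words, extended to words by concatenating choices and iterated. Legal words are subwords of words in some $\vartheta^p(a)$; $X_\vartheta\subseteq\mathcal A^{\mathbb Z}$ is the set of sequences all of whose subwords are legal, with shift $\sigma(x)_i=x_{i+1}$; $\operatorname{Aut}(X_\vartheta)$ is the group of shift-commuting homeomorphisms of $X_\vartheta$. $\vartheta$ is primitive if for some $p\ge1$ every letter occurs in some word of $\vartheta^p(b)$ for every $b\in\mathcal A$. *)

(* Defs.v *)
From HB Require Import structures.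
From mathcomp Require Import all_boot all_order all_algebra all_fingroup.
Set Implicit Arguments. Unset Strict Implicit. Unset Printing Implicit Defensive.

Local Open Scope ring_scope.

Definition rsubst (A : finType) := A -> seq (seq A).

Definition is_random_substitution (A : finType) (th : rsubst A) : Prop :=
  forall a : A, th a != [::] /\ all (fun w => w != [::]) (th a).

Definition rsubst_word (A : finType) (th : rsubst A) (w : seq A) : seq (seq A) :=
  foldr (fun a acc => [seq u ++ v | u <- th a, v <- acc]) [:: [::]] w.

Definition rsubst_set (A : finType) (th : rsubst A) (S : seq (seq A)) : seq (seq A) :=
  flatten (map (rsubst_word th) S).

Definition rsubst_iter (A : finType) (th : rsubst A) (p : nat) (a : A) : seq (seq A) :=
  iter p (rsubst_set th) [:: [:: a]].

Definition primitive (A : finType) (th : rsubst A) : Prop :=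
  exists p : nat, (1 <= p)%N /\
    forall a b : A, exists2 u, u \in rsubst_iter th p b & a \in u.

Definition legal (A : finType) (th : rsubst A) (w : seq A) : Prop :=
  exists (p : nat) (a : A), exists2 u, u \in rsubst_iter th p a & infix w u.

Definition fullshift (A : finType) := int -> A.

Definition shift (A : finType) (x : fullshift A) : fullshift A := fun i => x (i + 1).

Definition window (A : finType) (x : fullshift A) (i : int) (n : nat) : seq A :=
  [seq x (i + k%:Z) | k <- iota 0 n].

Definition in_X (A : finType) (th : rsubst A) (x : fullshift A) : Prop :=
  forall (i : int) (n : nat), legal th (window x i n).

Definition agree_on (A : finType) (n : nat) (x y : fullshift A) : Prop :=
  forall i : int, `|i| <= n%:Z -> x i = y i.

(* continuity on X (product topology, discrete alphabet) *)
Definition continuous_on_X (A : finType) (th : rsubst A)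
  (f : fullshift A -> fullshift A) : Prop :=
  forall x, in_X th x -> forall n : nat, exists m : nat,
    forall y, in_X th y -> agree_on m x y -> agree_on n (f x) (f y).

Definition is_aut (A : finType) (th : rsubst A) (f : fullshift A -> fullshift A) : Prop :=
  (forall x, in_X th x -> in_X th (f x)) /\
  continuous_on_X th f /\
  (forall x, in_X th x -> f (shift x) = shift (f x)) /\
  exists g : fullshift A -> fullshift A,
    (forall x, in_X th x -> in_X th (g x)) /\
    continuous_on_X th g /\
    (forall x, in_X th x -> g (f x) = x) /\
    (forall x, in_X th x -> f (g x) = x).

Definition aut_eq (A : finType) (th : rsubst A) (f g : fullshift A -> fullshift A) : Prop :=
  forall x, in_X th x -> f x = g x.

Definition aut_residually_finite (A : finType) (th : rsubst A) : Prop :=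
  forall f, is_aut th f -> ~ aut_eq th f id ->
    exists (gT : finGroupType) (phi : (fullshift A -> fullshift A) -> gT),
      (forall g h, is_aut th g -> is_aut th h -> aut_eq th g h -> phi g = phi h) /\
      (forall g h, is_aut th g -> is_aut th h -> phi (g \o h) = (phi g * phi h)%g) /\
      phi f != 1%g.

Definition has_periodic_point (A : finType) (th : rsubst A) : Prop :=
  exists x, in_X th x /\ exists n : nat, (1 <= n)%N /\ iter n (@shift A) x = x.

(* Main.v *)
Set Warnings "-notation-overridden -ambiguous-paths".
Require Import Defs.
From mathcomp Require Import all_boot all_order all_algebra all_fingroup zify.
From Stdlib Require Import ClassicalEpsilon FunctionalExtensionality Classical.
Set Implicit Arguments. Unset Strict Implicit. Unset Printing Implicit Defensive.
Import Order.TTheory GRing.Theory Num.Theory.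

Section Comb.
Variables (A : finType) (th : rsubst A).

Definition W K (s : seq A) := iter K (rsubst_set th) [:: s].

Lemma rw_cons a s : rsubst_word th (a :: s) =
  flatten [seq [seq u ++ v | v <- rsubst_word th s] | u <- th a].
Proof. by []. Qed.

Lemma rw_cat s1 s2 t1 t2 : t1 \in rsubst_word th s1 -> t2 \in rsubst_word th s2 ->
  t1 ++ t2 \in rsubst_word th (s1 ++ s2).
Proof.
elim: s1 t1 => [|a s1 IH] t1 /=.
  by rewrite inE => /eqP ->.
case/flatten_mapP => u Hu /mapP [v Hv ->] H2.
rewrite -catA; apply/flatten_mapP; exists u => //; apply/mapP; exists (v ++ t2) => //.
exact: IH.
Qed.

Lemma rs_setP S x : reflect (exists2 s, s \in S & x \in rsubst_word th s) (x \in rsubst_set th S).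
Proof. exact: flatten_mapP. Qed.

Lemma iter_mono K S S' : {subset S <= S'} ->
  {subset iter K (rsubst_set th) S <= iter K (rsubst_set th) S'}.
Proof.
elim: K => [|K IH] //= HS x /rs_setP [s Hs Hx].
apply/rs_setP; exists s => //; exact: IH.
Qed.

Lemma W_step K M t r s : t \in W K r -> r \in W M s -> t \in W (K + M) s.
Proof.
move=> Ht Hr; rewrite /W iterD; apply: (iter_mono (S := [:: r])) => //.
by move=> y; rewrite inE => /eqP ->.
Qed.

Lemma W_cat K s1 s2 t1 t2 : t1 \in W K s1 -> t2 \in W K s2 -> t1 ++ t2 \in W K (s1 ++ s2).
Proof.
elim: K t1 t2 => [|K IH] t1 t2 /=.
  by rewrite !inE => /eqP -> /eqP ->.
move=> /rs_setP [r1 Hr1 H1] /rs_setP [r2 Hr2 H2].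
apply/rs_setP; exists (r1 ++ r2); [exact: IH | exact: rw_cat].
Qed.

Hypothesis Hrs : is_random_substitution th.

Lemma rw_ne s : exists t, t \in rsubst_word th s.
Proof.
elim: s => [|a s [t Ht]] /=; first by exists [::]; rewrite inE.
have [Hne _] := Hrs a.
case E: (th a) Hne => [|u us] // _.
exists (u ++ t); apply/flatten_mapP; exists u; first by rewrite inE eqxx.
by apply/mapP; exists t.
Qed.

Lemma W_ne K s : exists t, t \in W K s.
Proof.
elim: K => [|K [r Hr]] /=; first by exists s; rewrite inE.
have [t Ht] := rw_ne r.
by exists t; apply/rs_setP; exists r.
Qed.

Lemma W_infix M K a r s t : r \in W M a -> infix s r -> t \in W K s ->
  exists2 r', r' \in W (K + M) a & infix t r'.
Proof.
move=> Hr /infixP [l [rr Er]] Ht.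
have [tl Htl] := W_ne K l; have [tr Htr] := W_ne K rr.
exists (tl ++ t ++ tr).
  apply: W_step Hr; rewrite Er; apply: W_cat => //; exact: W_cat.
by apply/infixP; exists tl, tr.
Qed.

Lemma legal_W K s t : legal th s -> t \in W K s -> legal th t.
Proof.
move=> [p [a [u Hu Hs]]] Ht.
have [r' Hr' Hi] := W_infix Hu Hs Ht.
by exists (K + p)%N, a, r'.
Qed.

Lemma legal_infix s s' : legal th s -> infix s' s -> legal th s'.
Proof.
move=> [p [a [u Hu Hs]]] Hi; exists p, a; exists u => //.
exact: infix_trans Hi Hs.
Qed.

Hypothesis Hprim : primitive th.

Lemma prim_legal w : legal th w -> exists K, forall b, exists2 r, r \in W K [:: b] & infix w r.
Proof.
move=> [p [a [u0 Hu0 Hw]]].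
have [q [_ Hq]] := Hprim.
exists (p + q)%N => b.
have [u Hu Ha] := Hq a b.
have Hi : infix [:: a] u.
  case/splitPr: Ha => l rr; apply/infixP; exists l, rr; by [].
have [r' Hr' Hi'] := W_infix (K := p) Hu Hi Hu0.
exists r' => //; exact: infix_trans Hw Hi'.
Qed.

End Comb.

Local Open Scope ring_scope.

Section Per.
Variables (A : finType) (th : rsubst A) (a0 : A).

Lemma iter_shift n (x : fullshift A) i : iter n (@shift A) x i = x (i + n%:Z).
Proof.
elim: n i => [|n IH] i /=; first by rewrite addr0.
rewrite /shift IH; congr x; lia.
Qed.

Lemma window_cat (x : fullshift A) i a b :
  window x i (a + b) = window x i a ++ window x (i + a%:Z) b.
Proof.
rewrite /window iotaD map_cat; congr (_ ++ _).
rewrite -[in iota a _](addn0 a) iotaDl -map_comp; apply: eq_map => k /=; congr x; lia.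
Qed.

Lemma shift_X x : in_X th x -> in_X th (shift x).
Proof.
move=> Hx i n; have -> : window (shift x) i n = window x (i + 1) n.
  by apply: eq_map => k; rewrite /shift; congr x; lia.
exact: Hx.
Qed.

Lemma iter_shift_X n x : in_X th x -> in_X th (iter n (@shift A) x).
Proof. by elim: n => [|n IH] //= Hx; apply: shift_X; apply: IH. Qed.

Definition rep k (v : seq A) := flatten (nseq k v).

Lemma rep_S k v : rep k.+1 v = v ++ rep k v.
Proof. by []. Qed.

Lemma size_rep k v : size (rep k v) = (k * size v)%N.
Proof. by elim: k => [|k IH] //=; rewrite size_cat IH mulSn. Qed.

Lemma window_periodic (y : fullshift A) n : (forall i, y (i + n%:Z) = y i) ->
  forall k, rep k (window y 0 n) = window y 0 (n * k).
Proof.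
move=> Hy; elim=> [|k IH]; first by rewrite muln0.
rewrite mulnS window_cat rep_S IH; congr (_ ++ _).
by apply: eq_map => j; rewrite add0r addrAC Hy.
Qed.

Definition per (v : seq A) (off : int) : fullshift A :=
  fun i => nth a0 v (absz ((i + off) %% (size v)%:Z)%Z).

Lemma per_period v off i : per v off (i + (size v)%:Z) = per v off i.
Proof. by rewrite /per addrAC modzDr. Qed.

Lemma nth_rep q v j : (0 < size v)%N -> (j < q * size v)%N ->
  nth a0 (rep q v) j = nth a0 v (j %% size v).
Proof.
move=> Hv; elim: q j => [|q IH] j //= Hj.
rewrite rep_S nth_cat; case: ltnP => Hjv; first by rewrite modn_small.
rewrite IH; last by rewrite mulSn in Hj; lia.
by rewrite -{2}(subnK Hjv) modnDr.
Qed.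

Lemma window_per v off i n : (0 < size v)%N ->
  window (per v off) i n =
  take n (drop (absz ((i + off) %% (size v)%:Z)%Z) (rep n.+1 v)).
Proof.
move=> Hv; set s := absz _.
have Hs : (s%:Z) = ((i + off) %% (size v)%:Z)%Z.
  by rewrite /s gez0_abs // modz_ge0 //; lia.
have Hsl : (s < size v)%N.
  have := ltz_pmod (i + off) (_ : 0 < (size v)%:Z); rewrite -Hs; lia.
have Hsz : (s + n <= size (rep n.+1 v))%N by rewrite size_rep; nia.
apply: (@eq_from_nth _ a0).
  rewrite size_map size_iota size_takel // size_drop; lia.
move=> k; rewrite size_map size_iota => Hk.
rewrite (nth_map 0%N) ?size_iota // nth_iota // add0n.
rewrite nth_take // nth_drop nth_rep //; last by nia.
rewrite /per; congr nth.
rewrite -[RHS](@absz_nat _) -modz_nat PoszD Hs modzDml; congr absz; congr modz; lia.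
Qed.

Lemma in_X_per v off : (0 < size v)%N -> (forall k, legal th (rep k v)) ->
  in_X th (per v off).
Proof.
move=> Hv Hl i n; rewrite window_per //.
apply: (legal_infix (Hl n.+1)).
set u := rep n.+1 v; set s := absz _.
apply/infixP; exists (take s u), (drop n (drop s u)).
by rewrite !cat_take_drop.
Qed.

End Per.

Section Dense.
Variables (A : finType) (th : rsubst A).
Hypotheses (Hrs : is_random_substitution th) (Hprim : primitive th)
  (Hper : has_periodic_point th).

Lemma W_nil K : [::] \in W th K [::].
Proof.
elim: K => [|K IH] /=; first by rewrite inE.
by apply/rs_setP; exists [::] => //; rewrite inE.
Qed.

Lemma dense x (Hx : in_X th x) (m : nat) : exists v off,
  (0 < size v)%N /\ in_X th (per (x 0) v off) /\ agree_on m x (per (x 0) v off).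
Proof.
set w := window x (- (m%:Z)) (m + m).+1.
have Hw : legal th w := Hx _ _.
have [K HK] := prim_legal Hrs Hprim Hw.
case: Hper => y [Hy [n [Hn Hyn]]].
have Hyp : forall i, y (i + n%:Z) = y i by move=> i; rewrite -iter_shift Hyn.
have Hlv : forall k, legal th (rep k (window y 0 n)).
  by move=> k; rewrite window_periodic //; apply: Hy.
have : size (window y 0 n) = n by rewrite size_map size_iota.
case Ev: (window y 0 n) => [|b v0] Hsz; first by move: Hn; rewrite -Hsz.
have [r Hr Hwr] := HK b.
have [t0 Ht0] := W_ne Hrs K v0.
have Hv' : r ++ t0 \in W th K (b :: v0) by exact: (W_cat Hr Ht0).
have Hrep : forall k, rep k (r ++ t0) \in W th K (rep k (b :: v0)).
  elim=> [|k IH]; first exact: W_nil.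
  by rewrite !rep_S; apply: W_cat.
have Hleg : forall k, legal th (rep k (r ++ t0)).
  by move=> k; apply: (legal_W Hrs (Hlv k)); rewrite Ev; apply: Hrep.
case/infixP: Hwr => l [rr0 Er].
have Ev' : r ++ t0 = l ++ w ++ (rr0 ++ t0) by rewrite Er !catA.
have Hszw : size w = (m + m).+1 by rewrite size_map size_iota.
exists (r ++ t0), ((m%:Z) + (size l)%:Z); split; last split.
- rewrite Ev' !size_cat Hszw; lia.
- apply: in_X_per => //; rewrite Ev' !size_cat Hszw; lia.
move=> i Hi; have /andP [Hi1 Hi2] : (- (m%:Z) <= i <= m%:Z) by rewrite -ler_norml.
clear Hi; rewrite /per.
set k := absz (i + m%:Z).
have Hk : i + (m%:Z + (size l)%:Z) = ((k + size l)%N)%:Z by rewrite /k; lia.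
rewrite Hk modz_small; last first. rewrite Ev' !size_cat Hszw; rewrite /k; apply/andP; split; first lia. rewrite ltz_nat. set L := size l. lia.
rewrite /= Ev' nth_cat (_ : (k + size l < size l)%N = false); last by lia.
rewrite addnK nth_cat Hszw (_ : (k < (m + m).+1)%N = true); last by rewrite /k; lia.
rewrite /w (nth_map 0%N) ?size_iota; last by rewrite /k; lia.
rewrite nth_iota; last by rewrite /k; lia.
congr x; rewrite /k; lia.
Qed.

End Dense.

Section Grp.
Variables (A : finType) (th : rsubst A) (a0 : A) (N : nat).
Hypothesis HN : (0 < N)%N.

Local Notation T := (N.-tuple A).

Definition ext (t : T) : fullshift A := per a0 t 0.

Lemma tup_proof (y : fullshift A) : size [seq y (k%:Z) | k <- iota 0 N] == N.
Proof. by rewrite size_map size_iota. Qed.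

Definition tup (y : fullshift A) : T := Tuple (tup_proof y).

Definition periodic (y : fullshift A) := forall i, y (i + N%:Z) = y i.

Lemma per_nat y : periodic y -> forall (q : nat) i, y (i + q%:Z * N%:Z) = y i.
Proof.
move=> Hy; elim=> [|q IH] i; first by rewrite mul0r addr0.
by rewrite -addn1 PoszD mulrDl mul1r addrA Hy IH.
Qed.

Lemma per_int y : periodic y -> forall (q : int) i, y (i + q * N%:Z) = y i.
Proof.
move=> Hy [q|q] i; first exact: per_nat.
rewrite -(per_nat Hy q.+1 (i + Negz q * N%:Z)); congr y.
rewrite NegzE; lia.
Qed.

Lemma ext_tup y : periodic y -> ext (tup y) = y.
Proof.
move=> Hy; apply: functional_extensionality => i.
rewrite /ext /per size_tuple addr0 /= (nth_map 0%N); last first.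
  rewrite size_iota; have := ltz_pmod i (_ : 0 < N%:Z); lia.
rewrite nth_iota; last by have := ltz_pmod i (_ : 0 < N%:Z); lia.
rewrite add0n gez0_abs; last by rewrite modz_ge0 //; lia.
by rewrite -(per_int Hy (i %/ N%:Z)%Z) addrC -divz_eq.
Qed.

Lemma tup_ext t : tup (ext t) = t.
Proof.
apply: val_inj => /=; apply: (@eq_from_nth _ a0).
  by rewrite size_map size_iota size_tuple.
move=> k; rewrite size_map size_iota => Hk.
rewrite (nth_map 0%N) ?size_iota // nth_iota // add0n /ext /per addr0 size_tuple.
by rewrite modz_small //.
Qed.

Lemma ext_periodic t : periodic (ext t).
Proof. by move=> i; rewrite /ext -{2}(size_tuple t) per_period. Qed.

Lemma periodic_iter y : periodic y -> iter N (@shift A) y = y.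
Proof.
by move=> Hy; apply: functional_extensionality => i; rewrite iter_shift Hy.
Qed.

Lemma aut_iter g n y : is_aut th g -> in_X th y ->
  g (iter n (@shift A) y) = iter n (@shift A) (g y).
Proof.
move=> [_ [_ [Hc _]]] Hy; elim: n => [|n IH] //=.
by rewrite Hc ?IH //; apply: iter_shift_X.
Qed.

Lemma aut_periodic g y : is_aut th g -> in_X th y -> periodic y -> periodic (g y).
Proof.
move=> Hg Hy Hp i; rewrite -iter_shift -aut_iter //.
by rewrite periodic_iter.
Qed.

Definition Pd (t : T) : bool :=
  if ClassicalEpsilon.excluded_middle_informative (in_X th (ext t)) then true else false.

Lemma PdP t : reflect (in_X th (ext t)) (Pd t).
Proof. by rewrite /Pd; case: ClassicalEpsilon.excluded_middle_informative => H; constructor. Qed.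

Definition F (g : fullshift A -> fullshift A) (t : T) : T :=
  if Pd t then tup (g (ext t)) else t.

Lemma F_comp g h : is_aut th g -> is_aut th h -> forall t, F (g \o h) t = F g (F h t).
Proof.
move=> Hg Hh t; have [HhX _] := Hh; rewrite /F; case: (PdP t) => Ht; last by rewrite (introF (PdP t) Ht).
have Hp : periodic (h (ext t)) by apply: aut_periodic => //; exact: ext_periodic.
rewrite (ext_tup Hp); case: (PdP (tup (h (ext t)))) => H; first by [].
by move: H; rewrite (ext_tup Hp) => /(_ (HhX _ Ht)).
Qed.

Lemma F_eq g h : aut_eq th g h -> F g =1 F h.
Proof. move=> E t; rewrite /F; case: (PdP t) => Ht; last by []. by rewrite E. Qed.

Lemma F_inj g : is_aut th g -> injective (F g).
Proof.
move=> Hg; have [HgX [_ [_ [g' [Hg'X [_ [Hgg' _]]]]]]] := Hg.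
apply: (@can_inj _ _ _ (F g')) => t; rewrite /F; case: (PdP t) => Ht; last by rewrite (introF (PdP t) Ht).
have Hp : periodic (g (ext t)) by apply: aut_periodic => //; exact: ext_periodic.
rewrite (ext_tup Hp); case: (PdP (tup (g (ext t)))) => H; last first.
  by move: H; rewrite (ext_tup Hp) => /(_ (HgX _ Ht)).
by rewrite (Hgg' _ Ht) tup_ext.
Qed.

Definition phi (g : fullshift A -> fullshift A) : {perm T} :=
  match ClassicalEpsilon.excluded_middle_informative (injective (F g)) with
  | left H => (perm H)^-1%g
  | right _ => 1%g
  end.

Lemma phiE g (H : injective (F g)) : phi g = (perm H)^-1%g.
Proof.
rewrite /phi; case: ClassicalEpsilon.excluded_middle_informative => // H'.
by congr (_^-1)%g; apply/permP => t; rewrite !permE.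
Qed.

Lemma phiM g h : is_aut th g -> is_aut th h -> phi (g \o h) = (phi g * phi h)%g.
Proof.
move=> Hg Hh.
have Hi : injective (F (g \o h)).
  by move=> t1 t2; rewrite (F_comp Hg Hh t1) (F_comp Hg Hh t2) => /(F_inj Hg) /(F_inj Hh).
rewrite (phiE Hi) (phiE (F_inj Hg)) (phiE (F_inj Hh)) -invMg; congr (_^-1)%g.
by apply/permP => t; rewrite permM !permE (F_comp Hg Hh t).
Qed.

Lemma phi_eq g h : is_aut th g -> is_aut th h -> aut_eq th g h -> phi g = phi h.
Proof.
move=> Hg Hh E; rewrite (phiE (F_inj Hg)) (phiE (F_inj Hh)); congr (_^-1)%g.
by apply/permP => t; rewrite !permE; apply: F_eq.
Qed.

End Grp.

Theorem corollary6p1 (A : finType) (th : rsubst A) :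
  is_random_substitution th -> primitive th -> has_periodic_point th ->
  aut_residually_finite th.
Proof.
move=> Hrs Hprim Hper f Hf Hnid.
have [x [Hx Hfx]] : exists x, in_X th x /\ f x <> x.
  apply: NNPP => H; apply: Hnid => x Hx; apply: NNPP => H'; apply: H; by exists x.
have [i Hi] : exists i, f x i <> x i.
  apply: NNPP => H; apply: Hfx; apply: functional_extensionality => j.
  apply: NNPP => H'; apply: H; by exists j.
have [_ [Hc _]] := Hf.
have [m0 Hm0] := Hc x Hx (absz i).
have [v [off [Hv [HzX Hag]]]] := dense Hrs Hprim Hper Hx (maxn m0 (absz i)).
set z := per (x 0) v off in HzX Hag.
have Hzp : periodic (size v) z by move=> j; rewrite /z per_period.
have Hfz : f z i <> z i.
  have Hag0 : agree_on m0 x z.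
    by move=> j Hj; apply: Hag; rewrite (le_trans Hj) // lez_nat leq_maxl.
  have Hii : `|i| <= (absz i)%:Z by rewrite abszE.
  rewrite -(Hm0 z HzX Hag0 i Hii) -(Hag i); first exact: Hi.
  by rewrite (le_trans Hii) // lez_nat leq_maxr.
exists {perm (size v).-tuple A}, (phi th (x 0) (size v)); split; [|split].
- by move=> g h Hg Hh E; apply: phi_eq.
- by move=> g h Hg Hh; apply: phiM.
have Hinj := @F_inj A th (x 0) (size v) Hv f Hf.
rewrite (phiE Hinj); apply/eqP => E.
have E1 : perm Hinj = 1%g by apply: invg_inj; rewrite E invg1.
have := congr1 (fun p : {perm _} => p (@tup A (size v) z)) E1.
rewrite permE perm1 /F.
have HP : @Pd A th (x 0) (size v) (@tup A (size v) z) by apply/PdP; rewrite ext_tup.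
rewrite HP (ext_tup (x 0) Hv Hzp) => /(congr1 (@ext A (x 0) (size v))).
rewrite (ext_tup (x 0) Hv Hzp) (ext_tup (x 0) Hv (aut_periodic Hf HzX Hzp)).
by move=> Heq; apply: Hfz; rewrite Heq.
Qed.
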